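(* If $D=(E;\Phi)$ is a binary delta-matroid and $a,b\in E$ are distinct, then $D'_{ab}$ is a binary delta-matroid.
   Context: A set system $(E;\Phi)$: finite $E$, nonempty $\Phi\subseteq2^E$. Twist: $D*E'=(E;\{\phi\Delta E'\mid\phi\in\Phi\})$. A framed graph is a simple graph with framing $f:V\to\{0,1\}$; its $\mathbb{F}_2$-adjacency matrix has diagonal entries $f(v)$; its nondegeneracy delta-matroid has ground set $V$ and feasible sets those $U$ whose induced adjacency matrix is nondegenerate over $\mathbb{F}_2$ (empty set included). A binary delta-matroid is a set system isomorphic to a twist of the nondegeneracy delta-matroid of a framed graph. Sliding $a$ over $b$ ($a\neq b$): $\widetilde D_{ab}=(E;\Phi\,\Delta\,\{\phi\sqcup\{a\}\mid\phi\subseteq E\setminus\{a,b\},\ \phi\sqcup\{b\}\in\Phi\})$. Exchanging the ends of $a$ and $b$: $D'_{ab}=\big(\widetilde{(D*\{b\})}_{ab}\big)*\{b\}$. *)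

(* Defs.v *)
From HB Require Import structures.
From mathcomp Require Import all_boot all_order all_algebra.
Set Implicit Arguments. Unset Strict Implicit. Unset Printing Implicit Defensive.
Import GRing.Theory.
Local Open Scope ring_scope.

(* A set system (E; Phi): E a finite type (ground set), Phi : {set {set E}}
   (nonemptiness is part of being a set system; it holds automatically for
   binary delta-matroids since they contain a twist of the empty set). *)

Definition symdiff (T : finType) (A B : {set T}) : {set T} :=
  (A :\: B) :|: (B :\: A).

Definition twist (E : finType) (Phi : {set {set E}}) (E' : {set E}) :
  {set {set E}} := [set symdiff phi E' | phi in Phi].

Definition induced_adj (V : finType) (adj : rel V) (fr : V -> bool)
  (U : {set V}) : 'M['F_2]_#|U| :=
  \matrix_(i < #|U|, j < #|U|)
    (let x := enum_val i in let y := enum_val j in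
     if x == y then (fr x)%:R else (adj x y)%:R).

Definition nondeg_feasible (V : finType) (adj : rel V) (fr : V -> bool) :
  {set {set V}} := [set U : {set V} | \det (induced_adj adj fr U) != 0].

Definition binary_dm (E : finType) (Phi : {set {set E}}) : Prop :=
  exists (V : finType) (adj : rel V) (fr : V -> bool) (X : {set V})
         (g : V -> E),
    [/\ symmetric adj, irreflexive adj, bijective g &
        Phi = [set g @: S | S : {set V} in twist (nondeg_feasible adj fr) X]].

Definition slide (E : finType) (Phi : {set {set E}}) (a b : E) :
  {set {set E}} :=
  symdiff Phi
    [set phi :|: [set a] | phi in
       [set phi : {set E} | (phi \subset ~: [set a; b]) &&
                            (phi :|: [set b] \in Phi)]].

Definition exchange_ends (E : finType) (Phi : {set {set E}}) (a b : E) :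
  {set {set E}} :=
  twist (slide (twist Phi [set b]) a b) [set b].

(* Main.v *)
Require Import Defs.
From mathcomp Require Import all_boot all_order all_algebra.
Set Implicit Arguments. Unset Strict Implicit. Unset Printing Implicit Defensive.
Import GRing.Theory.
Local Open Scope ring_scope.

Lemma F2_cases (c : 'F_2) : c = 0 \/ c = 1.
Proof. case: c => [[|[|n]] Hn]; [left|right|]; try by apply: ord_inj. by []. Qed.

Lemma F2_add_self (c : 'F_2) : c + c = 0.
Proof. by apply: addrr_pchar2; apply: pchar_Fp. Qed.

Lemma F2_opp (c : 'F_2) : - c = c.
Proof. by apply/eqP; rewrite eqr_oppLR -subr_eq0 opprK F2_add_self. Qed.

Lemma F2_eq1 (c : 'F_2) : ((c == 1)%:R : 'F_2) = c.
Proof. by case: (F2_cases c) => ->; rewrite ?eqxx // (negPf (@oner_neq0 _)). Qed.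

Section Kern.
Variable V : finType.
Implicit Types (K : V -> V -> 'F_2) (U S : {set V}).

Definition kmul K (x : {ffun V -> 'F_2}) (w : V) : 'F_2 := \sum_z x z * K z w.
Definition Mat K U : 'M['F_2]_#|U| := \matrix_(i, j) K (enum_val i) (enum_val j).
Definition ndK K : {set {set V}} := [set U : {set V} | \det (Mat K U) != 0].
Definition kfree K U := forall x : {ffun V -> 'F_2},
  (forall w, w \notin U -> x w = 0) -> (forall u, u \in U -> kmul K x u = 0) -> x = 0.

Lemma kmul_supp K U (x : {ffun V -> 'F_2}) u :
  (forall w, w \notin U -> x w = 0) ->
  kmul K x u = \sum_(i < #|U|) x (enum_val i) * K (enum_val i) u.
Proof.
move=> Hs; rewrite /kmul -(big_enum_val (fun z => x z * K z u)) /=.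
rewrite [RHS]big_mkcond /=; apply: eq_bigr => z _.
by case: ifP => // /negbT /Hs ->; rewrite mul0r.
Qed.

Lemma ndK_kfree K U : U \in ndK K <-> kfree K U.
Proof.
rewrite inE; split.
- move=> Hdet x Hs Hk; apply/ffunP => w; rewrite ffunE.
  apply/eqP; apply: contraNT Hdet => Hxw; apply/det0P.
  have wU : w \in U by apply: contraNT Hxw => /Hs ->.
  exists (\row_i x (enum_val i)).
    apply/eqP => /rowP /(_ (enum_rank_in wU w)); rewrite !mxE enum_rankK_in //.
    by move/eqP; rewrite (negPf Hxw).
  apply/rowP => j; rewrite !mxE.
  transitivity (kmul K x (enum_val j)); last by rewrite Hk // enum_valP.
  rewrite (kmul_supp _ _ Hs).
  by apply: eq_bigr => i _; rewrite !mxE.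
- move=> Hk; apply/negP => /det0P [v vn0 vM].
  pose x := [ffun w => \sum_(i < #|U| | enum_val i == w) v 0 i].
  have xe i : x (enum_val i) = v 0 i.
    rewrite ffunE (big_pred1 i) // => k /=; exact: (inj_eq enum_val_inj).
  have Hs : forall w, w \notin U -> x w = 0.
    move=> w wU; rewrite ffunE big_pred0 // => i; apply/negP => /eqP ei.
    by move: wU; rewrite -ei enum_valP.
  have := Hk x Hs; move=> H; apply/negP: vn0; rewrite negbK; apply/eqP.
  have x0 : x = 0.
    apply: H => u uU; rewrite (kmul_supp _ _ Hs).
    move/rowP: vM => /(_ (enum_rank_in uU u)); rewrite !mxE => E.
    rewrite -[in RHS]E; apply: eq_bigr => i _.
    by rewrite xe !mxE enum_rankK_in.
  by apply/rowP => i; rewrite -xe x0 !mxE ffunE.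
Qed.


Lemma kmulD K x1 x2 w : kmul K (x1 + x2) w = kmul K x1 w + kmul K x2 w.
Proof. by rewrite /kmul -big_split; apply: eq_bigr => z _; rewrite ffunE mulrDl. Qed.

Lemma kmul0 K w : kmul K 0 w = 0.
Proof. by rewrite /kmul big1 // => z _; rewrite ffunE mul0r. Qed.

Lemma F2_addI (a b : 'F_2) : a + b = 0 -> a = b.
Proof. by move/eqP; rewrite addr_eq0 F2_opp => /eqP. Qed.

Lemma in_symdiff (A B : {set V}) w : (w \in symdiff A B) = (w \in A) (+) (w \in B).
Proof. by rewrite /symdiff !inE; case: (w \in A); case: (w \in B). Qed.

Lemma ffun_add_self (x : {ffun V -> 'F_2}) : x + x = 0.
Proof. by apply/ffunP => w; rewrite !ffunE F2_add_self. Qed.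

Lemma ffun_addI (x y : {ffun V -> 'F_2}) : x + y = 0 -> x = y.
Proof. by move=> H; apply/ffunP => w; move/ffunP: H => /(_ w); rewrite !ffunE => /eqP; rewrite addr_eq0 F2_opp => /eqP. Qed.

Definition delta (z : V) : {ffun V -> 'F_2} := [ffun t => (t == z)%:R].

Lemma sum_delta (z : V) (F : V -> 'F_2) : \sum_t delta z t * F t = F z.
Proof.
rewrite (bigD1 z) //= big1 => [|t tz]; first by rewrite ffunE eqxx mul1r addr0.
by rewrite ffunE (negPf tz) mul0r.
Qed.

Lemma ffun_decomp (x : {ffun V -> 'F_2}) : x = \sum_(z | x z == 1) delta z.
Proof.
apply/ffunP => t; rewrite sum_ffunE big_mkcond /= (bigD1 t) //= big1 => [|z zt].
  by rewrite ffunE eqxx addr0 -{1}(F2_eq1 (x t)); case: (x t == 1).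
by case: ifP => // _; rewrite ffunE eq_sym (negPf zt).
Qed.

Section Tucker.
Variables (K : V -> V -> 'F_2) (S : {set V}).
Hypothesis Ksym : forall z w, K z w = K w z.
Hypothesis HS : kfree K S.

Definition phiS (x : {ffun V -> 'F_2}) : {ffun V -> 'F_2} :=
  [ffun w => if w \in S then kmul K x w else x w].

Lemma phiSD x1 x2 : phiS (x1 + x2) = phiS x1 + phiS x2.
Proof. by apply/ffunP => w; rewrite !ffunE kmulD; case: ifP. Qed.

Lemma phiS0 : phiS 0 = 0.
Proof. by apply/ffunP => w; rewrite !ffunE kmul0; case: ifP. Qed.

Lemma phiS_inj : injective phiS.
Proof.
move=> x1 x2 E; have H0 : phiS (x1 + x2) = 0 by rewrite phiSD E ffun_add_self.
apply: ffun_addI; apply: HS => [w wS|u uS].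
  by have := congr1 (fun f : {ffun V -> _} => f w) H0; rewrite !ffunE (negPf wS) => ->.
by have := congr1 (fun f : {ffun V -> _} => f u) H0; rewrite !ffunE uS.
Qed.

Definition psiS := invF phiS_inj.
Lemma psiSK : cancel psiS phiS. Proof. exact: f_invF. Qed.
Lemma phiSK : cancel phiS psiS. Proof. exact: invF_f. Qed.

Lemma psiSD x1 x2 : psiS (x1 + x2) = psiS x1 + psiS x2.
Proof. by apply: phiS_inj; rewrite phiSD !psiSK. Qed.
Lemma psiS0 : psiS 0 = 0.
Proof. by apply: phiS_inj; rewrite phiS0 psiSK. Qed.

Definition PhiS (x : {ffun V -> 'F_2}) : {ffun V -> 'F_2} :=
  [ffun w => if w \in S then psiS x w else kmul K (psiS x) w].

Lemma PhiSD x1 x2 : PhiS (x1 + x2) = PhiS x1 + PhiS x2.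
Proof. by apply/ffunP => w; rewrite !ffunE psiSD kmulD ffunE; case: ifP. Qed.
Lemma PhiS0 : PhiS 0 = 0.
Proof. by apply/ffunP => w; rewrite !ffunE psiS0 kmul0 ffunE; case: ifP. Qed.

Definition LS (z w : V) : 'F_2 := PhiS (delta z) w.

Lemma PhiS_lin x w : PhiS x w = kmul LS x w.
Proof.
rewrite {1}(ffun_decomp x) (big_morph PhiS PhiSD PhiS0) sum_ffunE /kmul /LS.
rewrite big_mkcond /=; apply: eq_bigr => z _.
by case: (F2_cases (x z)) => ->; rewrite ?eqxx ?mul1r // eq_sym oner_eq0 mul0r.
Qed.

Lemma kmul_sym (x1 x2 : {ffun V -> 'F_2}) : \sum_w x1 w * kmul K x2 w = \sum_w x2 w * kmul K x1 w.
Proof.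
rewrite /kmul; under eq_bigr do rewrite big_distrr.
rewrite exchange_big /=; apply: eq_bigr => z _; rewrite big_distrr /=.
by apply: eq_bigr => w _; rewrite Ksym mulrCA.
Qed.

Lemma PhiS_phiS x w : PhiS (phiS x) w = if w \in S then x w else kmul K x w.
Proof. by rewrite ffunE phiSK. Qed.

Lemma PhiS_iso (x1' x2' : {ffun V -> 'F_2}) :
  \sum_w x1' w * PhiS x2' w = \sum_w x2' w * PhiS x1' w.
Proof.
rewrite -(psiSK x1') -(psiSK x2'); move: (psiS x1') (psiS x2') => x1 x2.
apply: F2_addI; rewrite -big_split /=.
transitivity (\sum_w (x1 w * kmul K x2 w + x2 w * kmul K x1 w)).
  apply: eq_bigr => w _; rewrite !PhiS_phiS !ffunE.
  by case: (w \in S) => //; rewrite [_ * x2 w]mulrC [_ * x1 w]mulrC addrC.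
by rewrite big_split /= kmul_sym F2_add_self.
Qed.

Lemma LS_sym z w : LS z w = LS w z.
Proof.
by rewrite /LS -[LHS](sum_delta w) PhiS_iso sum_delta.
Qed.

Lemma tucker_kfree U : kfree LS U <-> kfree K (symdiff U S).
Proof.
split.
- move=> HL x Hs Hk.
  have x'0 : phiS x = 0.
    apply: HL => [w wU|u uU].
    + rewrite !ffunE; case: ifP => wS.
        by apply: Hk; rewrite in_symdiff wS (negPf wU).
      by apply: Hs; rewrite in_symdiff wS (negPf wU).
    + rewrite -PhiS_lin PhiS_phiS; case: ifP => uS.
        by apply: Hs; rewrite in_symdiff uS uU.
      by apply: Hk; rewrite in_symdiff uS uU.
  by rewrite -(phiSK x) x'0 psiS0.
- move=> HK x' Hs Hk.
  have x0 : psiS x' = 0.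
    apply: HK => [w|u].
    + rewrite in_symdiff; case wS: (w \in S); case wU: (w \in U) => //= _.
        by have := Hk w wU; rewrite -PhiS_lin ffunE wS.
      by have := Hs w (negbT wU); rewrite -{1}(psiSK x') ffunE wS.
    + rewrite in_symdiff; case uS: (u \in S); case uU: (u \in U) => //= _.
        by have := Hs u (negbT uU); rewrite -{1}(psiSK x') ffunE uS.
      by have := Hk u uU; rewrite -PhiS_lin ffunE uS.
  by rewrite -(psiSK x') x0 phiS0.
Qed.

End Tucker.


Lemma enum_val_lift_neq U a (aU : a \in U) k :
  enum_val (lift (enum_rank_in aU a) k) != a.
Proof.
apply: contra (neq_lift (enum_rank_in aU a) k) => /eqP e; apply/eqP.
by apply: enum_val_inj; rewrite e enum_rankK_in.
Qed.

Lemma det_split K K1 K2 U a : a \in U ->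
  (forall u, K a u = K1 a u + K2 a u) ->
  (forall w u, w != a -> K1 w u = K w u) ->
  (forall w u, w != a -> K2 w u = K w u) ->
  \det (Mat K U) = \det (Mat K1 U) + \det (Mat K2 U).
Proof.
move=> aU Ha H1 H2.
rewrite (@determinant_multilinear _ _ _ (Mat K1 U) (Mat K2 U) (enum_rank_in aU a) 1 1).
- by rewrite !mul1r.
- by apply/rowP => j; rewrite !mxE enum_rankK_in // !mul1r.
- by apply/matrixP => k l; rewrite !mxE H1 // enum_val_lift_neq.
- by apply/matrixP => k l; rewrite !mxE H2 // enum_val_lift_neq.
Qed.

Definition Krow K a b := fun w u => if w == a then (u == b)%:R else K w u.

Lemma det_Krow K U a b (aU : a \in U) (bU : b \in U) :
  \det (Mat (Krow K a b) U) = cofactor (Mat K U) (enum_rank_in aU a) (enum_rank_in bU b).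
Proof.
rewrite (expand_det_row _ (enum_rank_in aU a)) (bigD1 (enum_rank_in bU b)) //= big1 => [|j jb].
  rewrite !mxE /Krow enum_rankK_in // eqxx enum_rankK_in // eqxx mul1r addr0.
  rewrite /cofactor; congr (_ * \det _); apply/matrixP => k l; rewrite !mxE /Krow.
  by rewrite (negPf (enum_val_lift_neq _ _)).
rewrite !mxE /Krow enum_rankK_in // eqxx.
suff -> : (enum_val j == b) = false by rewrite mul0r.
apply/negbTE; apply: contra jb => /eqP ejb; apply/eqP; apply: enum_val_inj.
by rewrite ejb enum_rankK_in.
Qed.


Definition K4 K a b := fun w u =>
  if w == a then (u == b)%:R else if w == b then (u == a)%:R else K w u.
Definition zab a b (x : {ffun V -> 'F_2}) : {ffun V -> 'F_2} :=
  [ffun w => if (w == a) || (w == b) then 0 else x w].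

Lemma kmul_K4 K a b x u : a != b ->
  kmul (K4 K a b) x u = x a * (u == b)%:R + x b * (u == a)%:R + kmul K (zab a b x) u.
Proof.
move=> ab; have ba : b != a by rewrite eq_sym.
rewrite /kmul (bigD1 a) //= (bigD1 b) //= [in RHS](bigD1 a) //= [in RHS](bigD1 b) //=.
rewrite /K4 /zab !ffunE !eqxx (negPf ba) orbT /= !mul0r !add0r addrA.
congr (_ + _); apply: eq_bigr => w /andP [wa wb].
by rewrite ffunE (negPf wa) (negPf wb).
Qed.

Lemma kfree_K4 K U a b : a != b -> a \in U -> b \in U ->
  kfree (K4 K a b) U <-> kfree K (U :\: [set a; b]).
Proof.
move=> ab aU bU; have ba : b != a by rewrite eq_sym.
have inD w : (w \in U :\: [set a; b]) = [&& w != a, w != b & w \in U].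
  by rewrite !inE negb_or andbA.
split.
- move=> H4 x Hs Hk.
  have xa : x a = 0 by apply: Hs; rewrite inD eqxx.
  have xb : x b = 0 by apply: Hs; rewrite inD eqxx andbF.
  pose z : {ffun V -> 'F_2} :=
    [ffun w => if w == a then kmul K x b else if w == b then kmul K x a else x w].
  have zx : zab a b z = x.
    apply/ffunP => w; rewrite !ffunE.
    case: (w =P a) => [->|wa]; first by rewrite xa.
    by case: (w =P b) => [->|wb] //; rewrite xb.
  have z0 : z = 0.
    apply: H4 => [w wU|u uU].
      rewrite ffunE; case: (w =P a) => [e|wa]; first by move: wU; rewrite e aU.
      case: (w =P b) => [e|wb]; first by move: wU; rewrite e bU.
      by apply: Hs; rewrite inD (negPf wU) !andbF.
    rewrite kmul_K4 // zx !ffunE eqxx (negPf ba).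
    case: (u =P a) => [->|ua]; first by rewrite (negPf ab) eqxx /= mulr0 mulr1 add0r F2_add_self.
    case: (u =P b) => [->|ub]; first by rewrite mulr1 mulr0 addr0 F2_add_self.
    by rewrite !mulr0 !add0r; apply: Hk; rewrite inD uU andbT; apply/andP; split; apply/eqP.
  by rewrite -zx z0; apply/ffunP => w; rewrite !ffunE; case: ifP.
- move=> HK x Hs Hk.
  have z0 : zab a b x = 0.
    apply: HK => [w|u]; rewrite inD.
      move=> H; rewrite ffunE; case: ifP => // /norP [wa wb].
      by apply: Hs; move: H; rewrite wa wb.
    case/and3P => ua ub uU.
    by have := Hk u uU; rewrite kmul_K4 // (negPf ua) (negPf ub) !mulr0 !add0r.
  have xa : x a = 0.
    by have := Hk b bU; rewrite kmul_K4 // eqxx (negPf ba) z0 kmul0 mulr1 mulr0 !addr0.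
  have xb : x b = 0.
    by have := Hk a aU; rewrite kmul_K4 // eqxx (negPf ab) z0 kmul0 mulr1 mulr0 add0r addr0.
  apply/ffunP => w; have := congr1 (fun f : {ffun V -> _} => f w) z0.
  rewrite !ffunE; case: (w =P a) => [->|_]; first by rewrite xa.
  by case: (w =P b) => [->|_] //; rewrite xb.
Qed.


Definition Ktog K a b := fun w u =>
  K w u + (((w == a) && (u == b)) || ((w == b) && (u == a)))%:R.

Lemma F2_neq0_add (d e : 'F_2) : (d + e != 0) = (d != 0) (+) (e != 0).
Proof.
case: (F2_cases d) => ->; case: (F2_cases e) => ->;
  by rewrite ?addr0 ?add0r ?F2_add_self ?eqxx ?oner_eq0.
Qed.

Lemma toggle K a b U : (forall z w, K z w = K w z) -> a != b ->
  (U \in ndK (Ktog K a b)) =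
  (U \in ndK K) (+) [&& a \in U, b \in U & U :\: [set a; b] \in ndK K].
Proof.
move=> Ks ab; have ba : b != a by rewrite eq_sym.
have nU c (cU : c \in U = false) (i : 'I_#|U|) : (enum_val i == c) = false.
  by apply/negbTE; apply: contraFN cU => /eqP <-; apply: enum_valP.
case aU: (a \in U); case bU: (b \in U); rewrite /= ?addbF;
  last 3 first.
- by rewrite !inE; congr (\det _ != 0); apply/matrixP => i j;
    rewrite !mxE /Ktog !(nU b bU) ?andbF ?andFb /= addr0.
- by rewrite !inE; congr (\det _ != 0); apply/matrixP => i j;
    rewrite !mxE /Ktog !(nU a aU) ?andbF ?andFb /= addr0.
- by rewrite !inE; congr (\det _ != 0); apply/matrixP => i j;
    rewrite !mxE /Ktog !(nU a aU) !(nU b bU) /= addr0.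
pose Kb := fun w u => K w u + ((w == b) && (u == a))%:R.
pose Ka := fun w u => if w == a then (u == b)%:R else Kb w u.
have E1 : \det (Mat (Ktog K a b) U) = \det (Mat Kb U) + \det (Mat Ka U).
  apply: det_split aU _ _ _ => [u|w u wa|w u wa].
  - by rewrite /Ktog /Ka /Kb !eqxx (negPf ab) /= orbF addr0.
  - by rewrite /Ktog /Kb (negPf wa).
  - by rewrite /Ktog /Ka /Kb (negPf wa).
have E2 : \det (Mat Kb U) = \det (Mat K U) + \det (Mat (Krow K b a) U).
  apply: det_split bU _ _ _ => [u|w u wb|w u wb].
  - by rewrite /Kb /Krow !eqxx.
  - by rewrite /Kb (negPf wb) addr0.
  - by rewrite /Krow /Kb (negPf wb) addr0.
have E3 : \det (Mat Ka U) = \det (Mat (Krow K a b) U) + \det (Mat (K4 K a b) U).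
  apply: det_split bU _ _ _ => [u|w u wb|w u wb].
  - by rewrite /Ka /Kb /Krow /K4 !eqxx (negPf ba).
  - by rewrite /Ka /Kb /Krow (negPf wb) addr0.
  - by rewrite /Ka /Kb /K4 (negPf wb) addr0.
have C : \det (Mat (Krow K b a) U) = \det (Mat (Krow K a b) U).
  rewrite (det_Krow _ bU aU) (det_Krow _ aU bU) -cofactor_tr; congr cofactor.
  by apply/matrixP => i j; rewrite !mxE Ks.
rewrite inE E1 E2 E3 C -addrA (addrA (\det (Mat (Krow K a b) U))) F2_add_self add0r F2_neq0_add.
have -> : (\det (Mat K U) != 0) = (U \in ndK K) by rewrite inE.
have -> : (\det (Mat (K4 K a b) U) != 0) = (U \in ndK (K4 K a b)) by rewrite inE.
congr (addb _ _); apply/idP/idP => /ndK_kfree H; apply/ndK_kfree.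
  exact: (proj1 (kfree_K4 K ab aU bU) H).
exact: (proj2 (kfree_K4 K ab aU bU) H).
Qed.

End Kern.

Lemma tucker (V : finType) (K : V -> V -> 'F_2) (S : {set V}) :
  (forall z w, K z w = K w z) -> S \in ndK K ->
  exists L : V -> V -> 'F_2, (forall z w, L z w = L w z) /\
    forall U, (U \in ndK L) = (symdiff U S \in ndK K).
Proof.
move=> Ks /ndK_kfree HS; exists (LS HS); split; first exact: (LS_sym Ks).
move=> U; apply/idP/idP => /ndK_kfree H; apply/ndK_kfree.
  exact: (proj1 (tucker_kfree HS U) H).
exact: (proj2 (tucker_kfree HS U) H).
Qed.

Lemma symdiffK (T : finType) (A X : {set T}) : symdiff (symdiff A X) X = A.
Proof. by apply/setP => x; rewrite !in_symdiff -addbA addbb addbF. Qed.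

Lemma mem_twist (T : finType) (Phi : {set {set T}}) X S :
  (S \in twist Phi X) = (symdiff S X \in Phi).
Proof.
apply/imsetP/idP => [[phi Hphi ->]|H]; first by rewrite symdiffK.
by exists (symdiff S X) => //; rewrite symdiffK.
Qed.

Lemma memQ (T : finType) (Psi : {set {set T}}) a b S : a != b ->
  (S \in [set phi :|: [set a] | phi in
       [set phi : {set T} | (phi \subset ~: [set a; b]) &&
                            (phi :|: [set b] \in Psi)]]) =
  [&& a \in S, b \notin S & (S :\ a) :|: [set b] \in Psi].
Proof.
move=> ab; apply/imsetP/and3P => [[phi]|[aS bS H]].
  rewrite inE => /andP [sub Hin] ->.
  have aphi : a \notin phi by apply/negP => /(subsetP sub); rewrite !inE eqxx.
  have bphi : b \notin phi by apply/negP => /(subsetP sub); rewrite !inE eqxx orbT.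
  split; first by rewrite !inE eqxx orbT.
    by rewrite !inE (negPf bphi) eq_sym (negPf ab).
  suff -> : (phi :|: [set a]) :\ a = phi by [].
  apply/setP => x; rewrite !inE; case: (x =P a) => [->|] /=; first by rewrite (negPf aphi).
  by rewrite orbF.
exists (S :\ a); last by rewrite setUC setD1K.
rewrite inE H andbT; apply/subsetP => x; rewrite !inE negb_or.
case: (x =P a) => [->|] //=; case: (x =P b) => [->|] //=; by rewrite (negPf bS).
Qed.

Lemma exchE (T : finType) (Phi : {set {set T}}) a b S : a != b ->
  (S \in exchange_ends Phi a b) =
  (S \in Phi) (+) [&& a \in S, b \in S & S :\: [set a; b] \in Phi].
Proof.
move=> ab; rewrite /exchange_ends mem_twist /slide in_symdiff mem_twist symdiffK memQ //.
rewrite mem_twist !in_symdiff !inE (negPf ab) /= addbF.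
case bS: (b \in S) => /=; rewrite ?eqxx /= ?andbF ?addbF //.
congr (_ (+) (_ && (_ \in Phi))); apply/setP => x; rewrite !(in_symdiff, inE).
by case: (x \in S); case: (x == a); case: (x == b).
Qed.

Lemma nondeg_ndK (V : finType) (adj : rel V) (fr : V -> bool) :
  nondeg_feasible adj fr = ndK (fun x y => if x == y then (fr x)%:R else (adj x y)%:R).
Proof.
by apply/setP => U; rewrite !inE; congr (\det _ != 0); apply/matrixP => i j; rewrite !mxE.
Qed.

Lemma ndK_ext (V : finType) (K1 K2 : V -> V -> 'F_2) :
  (forall x y, K1 x y = K2 x y) -> ndK K1 = ndK K2.
Proof.
by move=> H; apply/setP => U; rewrite !inE; congr (\det _ != 0); apply/matrixP => i j; rewrite !mxE.
Qed.

Definition adjK (V : finType) (L : V -> V -> 'F_2) : rel V :=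
  fun x y => (x != y) && (L x y == 1).
Definition frK (V : finType) (L : V -> V -> 'F_2) : V -> bool := fun x => L x x == 1.

Lemma nondeg_adjK (V : finType) (L : V -> V -> 'F_2) :
  nondeg_feasible (adjK L) (frK L) = ndK L.
Proof.
rewrite nondeg_ndK; apply: ndK_ext => x y; rewrite /adjK /frK.
case: (x =P y) => [->|_] /=; exact: F2_eq1.
Qed.

Lemma memI (T1 T2 : finType) (g : T1 -> T2) (h : T2 -> T1) (TT : {set {set T1}}) (S : {set T2}) :
  cancel g h -> cancel h g ->
  (S \in [set g @: U | U : {set T1} in TT]) = (h @: S \in TT).
Proof.
move=> gh hg; apply/imsetP/idP => [[U HU ->]|H].
  by rewrite -imset_comp (eq_imset _ gh) imset_id.
by exists (h @: S) => //; rewrite -imset_comp (eq_imset _ hg) imset_id.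
Qed.

Lemma mem_imh (T1 T2 : finType) (g : T1 -> T2) (h : T2 -> T1) (A : {set T2}) (x : T1) :
  cancel g h -> cancel h g -> (x \in h @: A) = (g x \in A).
Proof. by move=> gh hg; rewrite -{1}(gh x) mem_imset //; apply: can_inj hg. Qed.

Theorem proposition4p4 (E : finType) (Phi : {set {set E}}) (a b : E) :
  a != b -> binary_dm Phi -> binary_dm (exchange_ends Phi a b).
Proof.
move=> ab [V [adj [fr [X [g [Hsym Hirr [h gh hg] HPhi]]]]]].
pose K := fun x y : V => if x == y then (fr x)%:R else (adj x y)%:R : 'F_2.
have Ksym : forall z w, K z w = K w z.
  move=> z w; rewrite /K; case: (z =P w) => [->|/eqP zw]; first by rewrite eqxx. 
  by rewrite eq_sym (negPf zw) Hsym.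
have PhiE S : (S \in Phi) = (symdiff (h @: S) X \in ndK K).
  by rewrite HPhi (memI _ _ gh hg) mem_twist nondeg_ndK.
case: (boolP [exists S : {set E}, [&& S \in Phi, a \notin S & b \notin S]]) => [|Hn].
  move/existsP => [psi /and3P [psiP apsi bpsi]].
  have HY : symdiff (h @: psi) X \in ndK K by rewrite -PhiE.
  have [L [Lsym HL]] := tucker Ksym HY.
  have hinj : injective h by apply: can_inj hg.
  have hab : h a != h b by rewrite (inj_eq hinj).
  pose L' := Ktog L (h a) (h b).
  have L'sym : forall z w, L' z w = L' w z.
    move=> z w; rewrite /L' /Ktog Lsym; congr (_ + _%:R).
    by rewrite orbC andbC [(w == h b) && _]andbC.
  exists V, (adjK L'), (frK L'), (h @: psi), g; split.
  - by move=> x y; rewrite /adjK eq_sym L'sym.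
  - by move=> x; rewrite /adjK eqxx.
  - by exists h.
  apply/setP => S; rewrite exchE // (memI _ _ gh hg) mem_twist nondeg_adjK /L' toggle // !HL.
  rewrite PhiE PhiE.
  have eqh x c : (x == h c) = (g x == c).
    by apply/eqP/eqP => [->|<-]; rewrite ?hg ?gh.
  congr (addb _ (_ && (_ && _))).
  - congr (_ \in ndK K); apply/setP => x; rewrite !in_symdiff.
    by case: (x \in h @: S); case: (x \in h @: psi); case: (x \in X).
  - by rewrite in_symdiff !(mem_imset _ _ hinj) (negPf apsi) addbF.
  - by rewrite in_symdiff !(mem_imset _ _ hinj) (negPf bpsi) addbF.
  - congr (_ \in ndK K); apply/setP => x; rewrite !(in_symdiff, inE) !(mem_imh _ _ gh hg) !inE !eqh.
    case: (g x =P a) => [->|_]; first by rewrite (negPf apsi).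
    case: (g x =P b) => [->|_]; first by rewrite (negPf bpsi).
    by case: (g x \in S); case: (g x \in psi); case: (x \in X).
exists V, adj, fr, X, g; split => //; first by exists h.
rewrite -HPhi; apply/setP => S; rewrite exchE //.
case H: [&& _, _ & _]; last by rewrite addbF.
case/negP: Hn; apply/existsP; exists (S :\: [set a; b]).
case/and3P: H => _ _ ->; rewrite !inE !eqxx /=; by rewrite orbT.
Qed.
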